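(* Let $N$ be a composite number with $N=\prod_{i=1}^{a}p_i^{2n_i}\prod_{j=1}^{b}q_j^{2m_j+1}$, where $p_1,\ldots,p_a,q_1,\ldots,q_b$ are distinct primes, $n_i\geq 1$ and $m_j\geq 0$ are integers. Then $box(\Gamma(\mathbb{Z}_N))\leq \prod_{i=1}^{a}(2n_i+1)\prod_{j=1}^{b}(2m_j+2)-\prod_{i=1}^{a}(n_i+1)\prod_{j=1}^{b}(m_j+1)-1.$
   Context: $\mathbb{Z}_N$ is the ring of integers modulo $N$. The zero-divisor graph $\Gamma(R)$ of a ring $R$ has as vertices the non-zero zero-divisors of $R$, two distinct vertices $x,y$ being adjacent iff $xy=0$. The boxicity $box(G)$ is the least positive integer $\ell$ such that $G$ is isomorphic to the intersection graph of a family of $\ell$-boxes (Cartesian products of $\ell$ closed bounded real intervals). *)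

(* Defs.v *)
From Stdlib Require Import Reals ClassicalEpsilon.
From mathcomp Require Import all_boot all_algebra.
Set Implicit Arguments. Unset Strict Implicit. Unset Printing Implicit Defensive.

(* A family (b_v)_{v in V} of l-boxes in R^l: b_v = prod_k [lo v k, hi v k]. *)
Definition box_rep (V : finType) (adj : rel V) (l : nat) : Prop :=
  exists (lo hi : V -> 'I_l -> R),
    (forall v k, Rle (lo v k) (hi v k)) /\
    forall u v : V, u != v ->
      (adj u v <->
       exists pt : 'I_l -> R, forall k,
         (Rle (lo u k) (pt k) /\ Rle (pt k) (hi u k)) /\
         (Rle (lo v k) (pt k) /\ Rle (pt k) (hi v k))).

Definition box_repb (V : finType) (adj : rel V) (l : nat) : bool :=
  if excluded_middle_informative (box_rep adj l) then true else false.

(* Boxicity: least l such that G is an intersection graph of l-boxes.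
   (l = 0 is allowed: this gives the standard convention box(K_n) = 0;
   for non-complete graphs it coincides with the least positive l.)
   The fallback value 0 is never used for finite graphs. *)
Definition boxicity (V : finType) (adj : rel V) : nat :=
  match excluded_middle_informative (exists l, box_repb adj l) with
  | left H => ex_minn H
  | right _ => 0
  end.

Local Open Scope ring_scope.

Definition is_zdiv (N : nat) (x : 'Z_N) : bool :=
  (x != 0) && [exists y : 'Z_N, (y != 0) && (x * y == 0)].

Definition zdv (N : nat) := {x : 'Z_N | is_zdiv x}.

Definition zdg (N : nat) : rel (zdv N) :=
  fun x y => (val x != val y) && (val x * val y == 0).

(* Main.v *)
Require Import Defs.
From Stdlib Require Import Reals Lra ClassicalEpsilon.
From mathcomp Require Import all_boot all_algebra.
From mathcomp Require Import zify.

Lemma zmul0 (N : nat) (x y : 'Z_N) : (1 < N)%N -> (x * y == 0)%R = (N %| (x : nat) * y)%N.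
Proof.
move=> H.
have e := Zp_cast H.
rewrite -val_eqE /=. move: (x:nat) (y:nat) => u v. by rewrite e /dvdn.
Qed.
Lemma zlt (N : nat) (x : 'Z_N) : (1 < N)%N -> ((x : nat) < N)%N.
Proof. move=> H. have := ltn_ord x. move: (x:nat) => u. by rewrite Zp_cast. Qed.

Lemma dvd_gcds N u v : (N %| u * v) = (N %| gcdn u N * gcdn v N).
Proof.
rewrite muln_gcdl muln_gcdr [N * _]muln_gcdr !dvdn_gcd.
by rewrite (@dvdn_mull N u N (dvdnn N)) (@dvdn_mulr N N v (dvdnn N)) (@dvdn_mulr N N N (dvdnn N)) !andbT.
Qed.

Section Box.
Variable N : nat.
Hypothesis HN : (1 < N)%N.

Definition Sdv := [set d : 'I_N.+1 | (1 < d) && ((d %| N) && ~~ (N %| d * d))]%N.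
Definition uu (x : zdv N) : nat := val (val x).
Definition gg (x : zdv N) : nat := gcdn (uu x) N.
Definition dk (k : 'I_#|Sdv|) : nat := val (enum_val k).

Lemma uu_lt x : (uu x < N)%N.
Proof. exact: zlt. Qed.

Lemma gg_dvd x : (gg x %| N)%N.
Proof. exact: dvdn_gcdr. Qed.

Lemma gg_gt1 x : (1 < gg x)%N.
Proof.
have N0 : (0 < N)%N by apply: ltnW.
have g0 : (0 < gg x)%N by rewrite gcdn_gt0 N0 orbT.
rewrite ltn_neqAle g0 andbT eq_sym; apply/negP => /eqP Hg; clear g0.
move: Hg; rewrite /gg /uu; case: x => x /= /andP[_ /existsP[y /andP[y0 xy]]] Hg.
move: xy; rewrite zmul0 // Gauss_dvdr; last by rewrite coprime_sym /coprime Hg.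
move: y0; rewrite -val_eqE /= => y0 Hd.
have := dvdn_leq _ Hd; rewrite lt0n y0 => /(_ isT).
by rewrite leqNgt zlt.
Qed.


Definition lo (x : zdv N) (k : 'I_#|Sdv|) : R :=
  if gg x == dk k then INR (uu x) else if (N %| gg x * dk k)%N then R0 else INR N.
Definition hi (x : zdv N) (k : 'I_#|Sdv|) : R :=
  if gg x == dk k then INR (uu x) else INR N.

Lemma dk_S k : (1 < dk k)%N && ((dk k %| N) && ~~ (N %| dk k * dk k))%N.
Proof. by have := enum_valP k; rewrite inE. Qed.

Lemma adj_iff x y : zdg x y = (val x != val y) && (N %| gg x * gg y)%N.
Proof. by rewrite /zdg zmul0 // dvd_gcds. Qed.

Lemma INR_le_N x : Rle (INR (uu x)) (INR N).
Proof. apply: le_INR; apply/leP; exact: ltnW (uu_lt x). Qed.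

Lemma sep x y : uu x != uu y -> ~~ (N %| gg x * gg y)%N -> ~~ (N %| gg x * gg x)%N ->
  exists k, Rlt (hi x k) (lo y k) \/ Rlt (hi y k) (lo x k).
Proof.
move=> Huv Hnd Hxx.
have gN : (gg x < N.+1)%N by rewrite ltnS dvdn_leq ?gg_dvd // ltnW.
have e : nat_of_ord (@inord N (gg x)) = gg x := inordK gN.
  have Hin : inord (gg x) \in Sdv by rewrite inE e gg_gt1 gg_dvd Hxx.
exists (enum_rank_in Hin (inord (gg x))).
have E : dk (enum_rank_in Hin (inord (gg x))) = gg x by rewrite /dk enum_rankK_in // inordK.
rewrite /hi /lo E eqxx.
case: eqP => [Hy | Hy].
  case: (ltngtP (uu x) (uu y)) => H.
  - by left; apply: lt_INR; apply/ltP.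
  - by right; apply: lt_INR; apply/ltP.
  - by rewrite H eqxx in Huv.
rewrite mulnC (negbTE Hnd); left; apply: lt_INR; apply/ltP; exact: uu_lt.
Qed.

Lemma box_main : box_rep (@zdg N) #|Sdv|.
Proof.
have N0 := pos_INR N.
exists lo, hi; split.
  move=> v k; rewrite /lo /hi; case: ifP => _; first lra.
  by case: ifP => _; lra.
move=> x y xy.
have vxy : val x != val y by apply: contra xy => /eqP /val_inj ->.
have uxy : uu x != uu y by [].
rewrite adj_iff vxy /=; split.
  move=> Hd.
  exists (fun k => if gg x == dk k then INR (uu x) else if gg y == dk k then INR (uu y) else INR N).
  move=> k; have /and3P[_ _ Hk] : [&& true, true & ~~ (N %| dk k * dk k)%N].
    by move: (dk_S k) => /andP[_ /andP[_ ->]].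
  have Ix := INR_le_N x; have Iy := INR_le_N y.
  have Px := pos_INR (uu x); have Py := pos_INR (uu y).
  rewrite /lo /hi; case: (eqVneq (gg x) (dk k)) => [Ex|Nx]; case: (eqVneq (gg y) (dk k)) => [Ey|Ny].
  - by move: Hd; rewrite Ex Ey (negbTE Hk).
  - by rewrite -Ex mulnC Hd; lra.
  - by rewrite -Ey Hd; lra.
  - by case: ifP => _; case: ifP => _; lra.
move=> [pt Hpt]; apply/negPn/negP => Hnd.
have [k Hk] : exists k, Rlt (hi x k) (lo y k) \/ Rlt (hi y k) (lo x k).
  case: (boolP (N %| gg x * gg x)%N) => Hxx; last exact: sep.
  case: (boolP (N %| gg y * gg y)%N) => Hyy.
    have : (N ^ 2 %| (gg x * gg y) ^ 2)%N.
      by rewrite expnMn -!mulnn; apply: dvdn_mul.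
    by rewrite dvdn_pexp2r // (negbTE Hnd).
  have [k Hk] : exists k, Rlt (hi y k) (lo x k) \/ Rlt (hi x k) (lo y k).
    by apply: sep => //; rewrite ?(eq_sym (uu y)) ?(mulnC (gg y)).
  by exists k; case: Hk; [right|left].
have := Hpt k; lra.
Qed.
End Box.

Lemma card_interval K lo hi : lo <= hi -> hi < K ->
  #|[set k : 'I_K | lo <= k <= hi]| = hi.+1 - lo.
Proof.
move=> Hlh HK.
rewrite -sum1_card.
rewrite (eq_bigl (fun k : 'I_K => lo <= k <= hi)); last by move=> k; rewrite inE.
rewrite -(big_mkord (fun k => lo <= k <= hi) (fun _ => 1)).
rewrite (eq_bigl (fun k => (lo <= k <= hi) && (k < hi.+1))); last first.
  by move=> k; case: (boolP (lo <= k <= hi)) => [/andP[_ H]|] //=; rewrite ltnS H.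
rewrite -big_nat_widen //.
rewrite (@big_cat_nat _ _ _ lo) //=; last exact: leqW.
rewrite [X in X + _]big1_seq; last first.
  by move=> i; rewrite mem_iota /= add0n subn0 => /andP[/andP[H _]]; rewrite ltnNge H.
rewrite add0n -big_filter.
rewrite (@eq_in_filter _ _ predT); last first.
  by move=> i; rewrite mem_iota subnKC ?ltnS; last exact: leqW.
by rewrite filter_predT big_const_nat iter_addn_0 mul1n.
Qed.
Lemma logn_prod (I : finType) (F : I -> nat) r :
  (forall x, 0 < F x) -> logn r (\prod_x F x) = \sum_x logn r (F x).
Proof.
move=> HF.
apply: (proj1 (big_ind2 (fun t s => logn r t = s /\ 0 < t) _ _ _)).
- by rewrite logn1.
- move=> t1 s1 t2 s2 [<- h1] [<- h2]; split; first by rewrite lognM.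
  by rewrite muln_gt0 h1.
- by move=> i _; split.
Qed.

Section Count.
Variables (I : finType) (prm hiE loE : I -> nat) (N : nat).
Hypotheses (Hpr : forall x, prime (prm x)) (Hinj : injective prm)
  (Hlo : forall x, loE x <= hiE x) (Hhl : forall x, hiE x <= 2 * loE x)
  (HN : N = \prod_x prm x ^ hiE x).

Lemma N_gt0 : 0 < N.
Proof. by rewrite HN prodn_gt0 // => x; rewrite expn_gt0 prime_gt0. Qed.

Lemma lognN r : logn r N = \sum_x hiE x * (r == prm x).
Proof.
rewrite HN logn_prod; last by move=> x; rewrite expn_gt0 prime_gt0.
by apply: eq_bigr => x _; rewrite lognX logn_prime.
Qed.

Lemma lognN_prm x : logn (prm x) N = hiE x.
Proof.
rewrite lognN (bigD1 x) //= eqxx muln1 big1 ?addn0 // => y Hy.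
by rewrite (inj_eq Hinj) eq_sym (negbTE Hy) muln0.
Qed.

Lemma lognN_other r : (forall x, r != prm x) -> logn r N = 0.
Proof. by move=> H; rewrite lognN big1 // => x _; rewrite (negbTE (H x)) muln0. Qed.

Lemma count_main :
  #|[set d : 'I_N.+1 | (d %| N) && ~~ (N %| d * d)]| <=
  \prod_x (hiE x).+1 - \prod_x (hiE x - loE x).+1.
Proof.
have N0 := N_gt0.
set S := [set d : 'I_N.+1 | _].
pose Ff x := [set k : 'I_N.+1 | k <= hiE x].
pose Fh x := [set k : 'I_N.+1 | loE x <= k <= hiE x].
pose A := [set f : {ffun I -> 'I_N.+1} | f \in family Ff].
pose B := [set f : {ffun I -> 'I_N.+1} | f \in family Fh].
have hiN x : hiE x < N.+1 by rewrite -lognN_prm ltnS ltnW // ltn_logl.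
have cardA : #|A| = \prod_x (hiE x).+1.
  rewrite cardsE card_family foldrE big_map big_enum /=.
  by apply: eq_bigr => x _; rewrite -(subn0 (hiE x).+1) -(@card_interval N.+1 0 (hiE x)) //;
     apply: eq_card => k; rewrite !inE.
have cardB : #|B| = \prod_x (hiE x - loE x).+1.
  rewrite cardsE card_family foldrE big_map big_enum /=.
  by apply: eq_bigr => x _; rewrite -subSn // card_interval.
have BA : B \subset A.
  apply/subsetP => f; rewrite !inE => /familyP Hf; apply/familyP => x.
  by move: (Hf x); rewrite !inE => /andP[].
have logd d : d %| N -> forall r, logn r d <= logn r N.
  by move=> Hd r; apply: dvdn_leq_log.
have logdN d : d %| N -> forall r, logn r d <= N.
  move=> Hd r; have d0 : 0 < d by apply: dvdn_gt0 Hd.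
  exact: leq_trans (ltnW (ltn_logl r d0)) (dvdn_leq N0 Hd).
pose phi (d : 'I_N.+1) := [ffun x => inord (logn (prm x) d) : 'I_N.+1].
have phiE (d : 'I_N.+1) (x : I) : d %| N -> (phi d x : nat) = logn (prm x) d.
  by move=> Hd; rewrite ffunE inordK // ltnS logdN.
have Hinjphi : {in S &, injective phi}.
  move=> d1 d2; rewrite !inE => /andP[H1 _] /andP[H2 _] Heq.
  apply: val_inj; apply: eqn_from_log; try exact: dvdn_gt0 N0 _.
  move=> r; case: (boolP [exists x, r == prm x]).
    move=> /existsP[x /eqP ->]; by rewrite -!phiE // Heq.
  rewrite negb_exists => /forallP Hr.
  have Hz := lognN_other r Hr.
  have z d : d %| N -> logn r d = 0 by move=> Hd; apply/eqP; rewrite -leqn0 -Hz logd.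
  by rewrite !z.
have Himg : phi @: S \subset A :\: B.
  apply/subsetP => f /imsetP[d]; rewrite inE => /andP[Hd HnN] ->.
  rewrite !inE; apply/andP; split.
    apply: contra HnN => /familyP Hf.
    have d0 : 0 < d by apply: dvdn_gt0 Hd.
    apply/gcdn_idPl; apply: eqn_from_log.
    - by rewrite gcdn_gt0 N0.
    - done.
    move=> r; rewrite logn_gcd ?muln_gt0 ?d0 //; apply/minn_idPl.
    rewrite lognM //; case: (boolP [exists x, r == prm x]).
      move=> /existsP[x /eqP ->]; rewrite lognN_prm.
      move: (Hf x); rewrite inE phiE // => /andP[Hl _].
      by rewrite addnn -mul2n (leq_trans (Hhl x)) // leq_mul2l Hl orbT.
    by rewrite negb_exists => /forallP Hr; rewrite (lognN_other r Hr).
  apply/familyP => x; rewrite inE phiE //.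
  by rewrite -lognN_prm logd.
rewrite -(card_in_imset Hinjphi) -cardA -cardB.
apply: leq_trans (subset_leq_card Himg) _.
by rewrite cardsD (setIidPr BA).
Qed.
End Count.

Lemma boxicity_le (V : finType) (adj : rel V) l : box_rep adj l -> (boxicity adj <= l)%N.
Proof.
move=> H.
have Hb : box_repb adj l by rewrite /box_repb; case: excluded_middle_informative.
rewrite /boxicity; case: excluded_middle_informative => // ex.
by case: ex_minnP => k _; apply.
Qed.

Theorem theorem5p2 (N a b : nat)
  (p n : 'I_a -> nat) (q m : 'I_b -> nat) :
  (forall i, prime (p i)) -> (forall j, prime (q j)) ->
  injective p -> injective q -> (forall i j, p i != q j) ->
  (forall i, 1 <= n i) ->
  N = (\prod_(i < a) p i ^ (2 * n i) * \prod_(j < b) q j ^ (2 * m j + 1))%N ->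
  1 < N -> ~~ prime N ->
  (boxicity (@zdg N) <=
     \prod_(i < a) (2 * n i + 1) * \prod_(j < b) (2 * m j + 2)
     - \prod_(i < a) (n i + 1) * \prod_(j < b) (m j + 1) - 1)%N.
Proof.
move=> Hp Hq Ip Iq Hpq Hn HN H1 _.
have B := @boxicity_le _ _ _ (@box_main N H1). apply: leq_trans B _.
pose prm (x : 'I_a + 'I_b) := match x with inl i => p i | inr j => q j end.
pose hiE (x : 'I_a + 'I_b) := match x with inl i => 2 * n i | inr j => 2 * m j + 1 end.
pose loE (x : 'I_a + 'I_b) := match x with inl i => n i | inr j => m j + 1 end.
have Hpr x : prime (prm x) by case: x.
have Hinj : injective prm.
  case=> [i|j] [i'|j'] /= E.
  - by rewrite (Ip _ _ E).
  - by move: (Hpq i j'); rewrite E eqxx.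
  - by move: (Hpq i' j); rewrite E eqxx.
  - by rewrite (Iq _ _ E).
have Hlo x : loE x <= hiE x by case: x => [i|j] /=; lia.
have Hhl x : hiE x <= 2 * loE x by case: x => [i|j] /=; lia.
have HN' : N = \prod_x prm x ^ hiE x by rewrite big_sumType.
have C := @count_main _ prm hiE loE N Hpr Hinj Hlo Hhl HN'.
rewrite !big_sumType /= in C.
have E1 : \prod_i (2 * n i + 1) * \prod_j (2 * m j + 2) = \prod_i (2 * n i).+1 * \prod_j (2 * m j + 1).+1.
  by congr (_ * _); apply: eq_bigr => i _; lia.
have E2 : \prod_i (n i + 1) * \prod_j (m j + 1) = \prod_i (2 * n i - n i).+1 * \prod_j (2 * m j + 1 - (m j + 1)).+1.
  congr (_ * _); apply: eq_bigr => i _.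
    by lia.
  by lia.
rewrite E1 E2 -subnDA addn1.
have Hlt : #|Sdv N| < #|[set d : 'I_N.+1 | (d %| N) && ~~ (N %| d * d)]|; last first.
  by have H := leq_trans Hlt C; rewrite subnS -ltnS (ltn_predK H).
apply: proper_card; apply/properP; split.
  by apply/subsetP => d; rewrite !inE => /andP[_ ->].
exists (inord 1); rewrite !inE inordK ?ltnS ?(ltnW H1) //.
by rewrite dvd1n muln1 dvdn1 neq_ltn H1 orbT.
Qed.
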